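(* Let $(M^n,g)$ be a Riemannian manifold with Levi-Civita connection which is semisymmetric, i.e. $[\nabla_a,\nabla_b] R_{cdef}=0$. Then $$R_{abc}{}^m R_{dme}{}^f+R_{bcd}{}^m R_{ame}{}^f+R_{cda}{}^m R_{bme}{}^f+R_{dab}{}^m R_{cme}{}^f - R_{ace}{}^m R_{bdm}{}^f + R_{acm}{}^f R_{bde}{}^m =0,$$ $$R_{am}R_{bce}{}^m + R_{bm}R_{cae}{}^m+ R_{cm}R_{abe}{}^m =0,$$ $$R_{am} R_{bec}{}^m - R_{bm}R_{ace}{}^m + R_{cm} R_{eba}{}^m -R_{em} R_{cab}{}^m =0 .$$
   Context: Abstract index notation with Einstein summation; indices lowered with $g$, $R_{abcd}=R_{abc}{}^eg_{ed}$. $R_{abc}{}^d = \partial_a \Gamma_{bc}^d - \partial_b\Gamma_{ac}^d - \Gamma_{ac}^k\Gamma_{bk}^d + \Gamma_{ak}^d \Gamma_{bc}^k$, $R_{ac}=R_{abc}{}^b$, $[\nabla_a,\nabla_b]=\nabla_a\nabla_b-\nabla_b\nabla_a$. *)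

(* Defs.v *)
From Stdlib Require Import Reals List Arith ClassicalEpsilon.
Import ListNotations.
Open Scope R_scope.

(* Points of R^n are represented as nat -> R; only coordinates k < n matter
   (continuity below forces functions to be independent of coordinates >= n). *)
Definition pt := nat -> R.

Fixpoint sm (n : nat) (f : nat -> R) : R :=
  match n with O => 0 | S m => sm m f + f m end.

Definition shift (x : pt) (i : nat) (t : R) : pt :=
  fun k => if Nat.eqb k i then x k + t else x k.

(* partial derivative d/dx^i (chosen value of the limit when it exists) *)
Definition pd (i : nat) (f : pt -> R) (x : pt) : R :=
  epsilon (inhabits 0) (fun l => derivable_pt_lim (fun t => f (shift x i t)) 0 l).

Fixpoint iterpd (ds : list nat) (f : pt -> R) : pt -> R :=
  match ds with [] => f | i :: ds' => pd i (iterpd ds' f) end.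

Definition cont_at (n : nat) (f : pt -> R) (x : pt) : Prop :=
  forall eps, eps > 0 -> exists delta, delta > 0 /\
    forall y : pt, (forall k, (k < n)%nat -> Rabs (y k - x k) < delta) ->
      Rabs (f y - f x) < eps.

Definition smooth (n : nat) (f : pt -> R) : Prop :=
  forall ds : list nat, (forall i, In i ds -> (i < n)%nat) ->
    (forall x, cont_at n (iterpd ds f) x) /\
    (forall i x, (i < n)%nat ->
       exists l, derivable_pt_lim (fun t => iterpd ds f (shift x i t)) 0 l).

Definition metric := nat -> nat -> pt -> R.

Definition riemannian (n : nat) (g ginv : metric) : Prop :=
  (forall i j, (i < n)%nat -> (j < n)%nat -> smooth n (g i j)) /\
  (forall i j, (i < n)%nat -> (j < n)%nat -> smooth n (ginv i j)) /\
  (forall i j x, g i j x = g j i x) /\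
  (forall x (v : nat -> R), (exists k, (k < n)%nat /\ v k <> 0) ->
     sm n (fun i => sm n (fun j => g i j x * v i * v j)) > 0) /\
  (forall i j x, (i < n)%nat -> (j < n)%nat ->
     sm n (fun k => ginv i k x * g k j x) = if Nat.eqb i j then 1 else 0).

Definition Gam (n : nat) (g ginv : metric) (i j k : nat) (x : pt) : R :=
  / 2 * sm n (fun l => ginv k l x *
        (pd i (g j l) x + pd j (g i l) x - pd l (g i j) x)).

Definition Rup (n : nat) (g ginv : metric) (a b c d : nat) (x : pt) : R :=
  pd a (Gam n g ginv b c d) x - pd b (Gam n g ginv a c d) x
  - sm n (fun k => Gam n g ginv a c k x * Gam n g ginv b k d x)
  + sm n (fun k => Gam n g ginv a k d x * Gam n g ginv b c k x).

Definition Rdown (n : nat) (g ginv : metric) (a b c d : nat) (x : pt) : R :=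
  sm n (fun e => Rup n g ginv a b c e x * g e d x).

Definition Ric (n : nat) (g ginv : metric) (a c : nat) (x : pt) : R :=
  sm n (fun b => Rup n g ginv a b c b x).

(* covariant tensor fields, indexed by the list of their (lower) indices *)
Definition tensor := list nat -> pt -> R.

(* sum over the slots of idx of  Gamma_{a c}^m T_{.. m ..}  (c = index in that slot) *)
Fixpoint corr (n : nat) (G : nat -> nat -> nat -> pt -> R) (a : nat) (T : tensor)
  (pre suf : list nat) (x : pt) : R :=
  match suf with
  | [] => 0
  | c :: s => sm n (fun m => G a c m x * T (pre ++ m :: s) x)
              + corr n G a T (pre ++ [c]) s x
  end.

(* Levi-Civita covariant derivative: (cov T) (a :: idx) = nabla_a T_idx *)
Definition cov (n : nat) (g ginv : metric) (T : tensor) : tensor :=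
  fun l x => match l with
  | [] => 0
  | a :: idx => pd a (T idx) x - corr n (Gam n g ginv) a T [] idx x
  end.

Definition Rtens (n : nat) (g ginv : metric) : tensor :=
  fun l x => match l with
  | [c; d; e; f] => Rdown n g ginv c d e f x
  | _ => 0
  end.

Definition semisymmetric (n : nat) (g ginv : metric) : Prop :=
  forall a b c d e f x, (a < n)%nat -> (b < n)%nat -> (c < n)%nat ->
    (d < n)%nat -> (e < n)%nat -> (f < n)%nat ->
    cov n g ginv (cov n g ginv (Rtens n g ginv)) [a; b; c; d; e; f] x
    - cov n g ginv (cov n g ginv (Rtens n g ginv)) [b; a; c; d; e; f] x = 0.

(* Main.v *)
Require Import Defs.
From Stdlib Require Import Reals List Arith Lia Lra FunctionalExtensionality ClassicalEpsilon.
From Coquelicot Require Derive Derive_2d Continuity Hierarchy.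
Import ListNotations.
Open Scope R_scope.

Lemma sm_ext N f g : (forall k, (k < N)%nat -> f k = g k) -> sm N f = sm N g.
Proof. induction N; simpl; intros H; [reflexivity|]. rewrite IHN by (intros; apply H; lia). rewrite H by lia. reflexivity. Qed.

Lemma sm_plus N f g : sm N (fun k => f k + g k) = sm N f + sm N g.
Proof. induction N; simpl; [lra|]. rewrite IHN. lra. Qed.

Lemma sm_minus N f g : sm N (fun k => f k - g k) = sm N f - sm N g.
Proof. induction N; simpl; [lra|]. rewrite IHN. lra. Qed.

Lemma sm_scal_l N c f : sm N (fun k => c * f k) = c * sm N f.
Proof. induction N; simpl; [lra|]. rewrite IHN. lra. Qed.

Lemma sm_scal_r N c f : sm N (fun k => f k * c) = sm N f * c.
Proof. induction N; simpl; [lra|]. rewrite IHN. lra. Qed.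

Lemma sm_zero N : sm N (fun _ => 0) = 0.
Proof. induction N; simpl; [lra|]. rewrite IHN. lra. Qed.

Lemma sm_zero' N f : (forall k, (k < N)%nat -> f k = 0) -> sm N f = 0.
Proof. intros H. rewrite (sm_ext N f (fun _ => 0)) by auto. apply sm_zero. Qed.

Lemma sm_swap N M F : sm N (fun i => sm M (fun j => F i j)) = sm M (fun j => sm N (fun i => F i j)).
Proof.
  induction N; simpl.
  - symmetry. apply sm_zero.
  - rewrite IHN. rewrite <- sm_plus. reflexivity.
Qed.

Lemma sm_first N f : sm (S N) f = f 0%nat + sm N (fun k => f (S k)).
Proof.
  induction N; simpl in *; [lra|]. rewrite IHN. lra.
Qed.

Lemma sm_delta N k f : (k < N)%nat -> sm N (fun i => (if Nat.eqb i k then 1 else 0) * f i) = f k.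
Proof.
  induction N; intros H; [lia|]. simpl.
  destruct (Nat.eq_dec k N).
  - subst. rewrite Nat.eqb_refl. rewrite sm_zero'. lra.
    intros j Hj. destruct (Nat.eqb_spec j N); [lia|]. lra.
  - rewrite IHN by lia. destruct (Nat.eqb_spec N k); [lia|]. lra.
Qed.

Lemma sm_delta' N k f : (k < N)%nat -> sm N (fun i => (if Nat.eqb k i then 1 else 0) * f i) = f k.
Proof.
  intros H. rewrite <- (sm_delta N k f H). apply sm_ext. intros j _.
  rewrite Nat.eqb_sym. reflexivity.
Qed.

Lemma pd_spec i f x l :
  derivable_pt_lim (fun t => f (shift x i t)) 0 l -> pd i f x = l.
Proof.
  intros H. unfold pd.
  assert (E : exists l, derivable_pt_lim (fun t => f (shift x i t)) 0 l) by eauto.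
  pose proof (epsilon_spec (inhabits 0) _ E) as H2.
  eapply uniqueness_limite; eauto.
Qed.

Lemma iterpd_app ds i f : iterpd (ds ++ [i]) f = iterpd ds (pd i f).
Proof. induction ds; simpl; auto. rewrite IHds. reflexivity. Qed.

Definition C0 n f := (forall x, cont_at n f x) /\
  (forall i x, (i < n)%nat -> exists l, derivable_pt_lim (fun t => f (shift x i t)) 0 l).

Definition Sk n (k : nat) f := forall ds, (length ds <= k)%nat -> (forall i, In i ds -> (i < n)%nat) ->
  C0 n (iterpd ds f).

Lemma smooth_Sk n f : smooth n f <-> forall k, Sk n k f.
Proof.
  split.
  - intros H k ds _ Hds. apply H; auto.
  - intros H ds Hds. apply (H (length ds) ds); auto.
Qed.

Lemma Sk_0 n f : Sk n 0 f <-> C0 n f.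
Proof.
  split.
  - intros H. apply (H []); simpl; auto. intros i [].
  - intros H ds Hl _. destruct ds; simpl in *; [auto|lia].
Qed.

Lemma Sk_S n k f : Sk n (S k) f <-> C0 n f /\ forall i, (i < n)%nat -> Sk n k (pd i f).
Proof.
  split.
  - intros H. split.
    + apply (H []); simpl; [lia| intros i []].
    + intros i Hi ds Hl Hds. rewrite <- iterpd_app. apply H.
      rewrite length_app; simpl; lia.
      intros j Hj. apply in_app_or in Hj. destruct Hj as [Hj|[Hj|[]]]; auto. subst; auto.
  - intros [H0 H] ds Hl Hds.
    destruct ds as [|j ds0].
    + exact H0.
    + destruct (exists_last (l:=j::ds0) ltac:(discriminate)) as [ds' [i E]].
      rewrite E in *. rewrite iterpd_app.
      rewrite length_app in Hl. simpl in Hl.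
      apply H.
      * apply Hds. apply in_or_app. simpl; auto.
      * lia.
      * intros m Hm. apply Hds. apply in_or_app. auto.
Qed.

Lemma Sk_mono n k k' f : (k' <= k)%nat -> Sk n k f -> Sk n k' f.
Proof. intros Hk H ds Hl Hds. apply H; auto; lia. Qed.

Lemma Sk_C0 n k f : Sk n k f -> C0 n f.
Proof. intros H. apply Sk_0. apply (Sk_mono n k 0 f); [lia|exact H]. Qed.


Lemma cont_const n c x : cont_at n (fun _ => c) x.
Proof. intros eps He. exists 1. split; [lra|]. intros y _. rewrite Rminus_diag, Rabs_R0. lra. Qed.

Lemma cont_plus n f g x : cont_at n f x -> cont_at n g x -> cont_at n (fun y => f y + g y) x.
Proof.
  intros Hf Hg eps He.
  destruct (Hf (eps/2)) as [d1 [Hd1 H1]]; [lra|].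
  destruct (Hg (eps/2)) as [d2 [Hd2 H2]]; [lra|].
  exists (Rmin d1 d2). split; [apply Rmin_pos; auto|].
  intros y Hy.
  assert (A1 : Rabs (f y - f x) < eps/2).
  { apply H1. intros k Hk. specialize (Hy k Hk). pose proof (Rmin_l d1 d2). lra. }
  assert (A2 : Rabs (g y - g x) < eps/2).
  { apply H2. intros k Hk. specialize (Hy k Hk). pose proof (Rmin_r d1 d2). lra. }
  replace (f y + g y - (f x + g x)) with ((f y - f x) + (g y - g x)) by ring.
  pose proof (Rabs_triang (f y - f x) (g y - g x)). lra.
Qed.

Lemma cont_mult n f g x : cont_at n f x -> cont_at n g x -> cont_at n (fun y => f y * g y) x.
Proof.
  intros Hf Hg eps He.
  set (A := Rabs (f x) + 1). set (B := Rabs (g x) + 1).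
  assert (HA : A > 0) by (unfold A; pose proof (Rabs_pos (f x)); lra).
  assert (HB : B > 0) by (unfold B; pose proof (Rabs_pos (g x)); lra).
  destruct (Hf (eps/(2*B))) as [d1 [Hd1 H1]].
  { apply Rdiv_lt_0_compat; lra. }
  destruct (Hg (Rmin 1 (eps/(2*A)))) as [d2 [Hd2 H2]].
  { apply Rmin_pos; [lra|]. apply Rdiv_lt_0_compat; lra. }
  exists (Rmin d1 d2). split; [apply Rmin_pos; auto|].
  intros y Hy.
  assert (A1 : Rabs (f y - f x) < eps/(2*B)).
  { apply H1. intros k Hk. specialize (Hy k Hk). pose proof (Rmin_l d1 d2). lra. }
  assert (A2 : Rabs (g y - g x) < Rmin 1 (eps/(2*A))).
  { apply H2. intros k Hk. specialize (Hy k Hk). pose proof (Rmin_r d1 d2). lra. }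
  pose proof (Rmin_l 1 (eps/(2*A))) as M1. pose proof (Rmin_r 1 (eps/(2*A))) as M2.
  assert (Gy : Rabs (g y) <= B).
  { unfold B. replace (g y) with (g x + (g y - g x)) by ring.
    pose proof (Rabs_triang (g x) (g y - g x)). lra. }
  replace (f y * g y - f x * g x) with ((f y - f x) * g y + f x * (g y - g x)) by ring.
  eapply Rle_lt_trans; [apply Rabs_triang|].
  rewrite !Rabs_mult.
  assert (T1 : Rabs (f y - f x) * Rabs (g y) <= eps/(2*B) * B).
  { apply Rmult_le_compat; try apply Rabs_pos; lra. }
  assert (T2 : Rabs (f x) * Rabs (g y - g x) <= A * (eps/(2*A))).
  { assert (Rabs (f x) <= A) by (unfold A; lra). apply Rmult_le_compat; try apply Rabs_pos; lra. }
  assert (E1 : eps/(2*B)*B = eps/2) by (field; lra).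
  assert (E2 : A * (eps/(2*A)) = eps/2) by (field; lra).
  assert (T1' : Rabs (f y - f x) * Rabs (g y) < eps/2 \/ Rabs (f x) * Rabs (g y - g x) < eps/2).
  { destruct (Req_dec (Rabs (g y)) 0) as [Z|Z].
    - left. rewrite Z, Rmult_0_r. lra.
    - left. pose proof (Rabs_pos (g y)).
      apply Rlt_le_trans with (eps/(2*B) * Rabs (g y)).
      + apply Rmult_lt_compat_r; lra.
      + rewrite <- E1. apply Rmult_le_compat_l; [|lra]. apply Rlt_le, Rdiv_lt_0_compat; lra. }
  lra.
Qed.

Lemma pd_ok n f i x : C0 n f -> (i < n)%nat ->
  derivable_pt_lim (fun t => f (shift x i t)) 0 (pd i f x).
Proof.
  intros [_ H] Hi. destruct (H i x Hi) as [l Hl]. rewrite (pd_spec _ _ _ l Hl). exact Hl.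
Qed.

Lemma C0_const n c : C0 n (fun _ => c).
Proof.
  split; [intros; apply cont_const|]. intros i x _. exists 0.
  apply (derivable_pt_lim_const c 0).
Qed.

Lemma C0_plus n f g : C0 n f -> C0 n g -> C0 n (fun y => f y + g y).
Proof.
  intros Hf Hg. split.
  - intros x. apply cont_plus; [apply Hf|apply Hg].
  - intros i x Hi. exists (pd i f x + pd i g x).
    apply (derivable_pt_lim_plus (fun t => f (shift x i t)) (fun t => g (shift x i t)));
      apply (pd_ok n); auto.
Qed.

Lemma C0_mult n f g : C0 n f -> C0 n g -> C0 n (fun y => f y * g y).
Proof.
  intros Hf Hg. split.
  - intros x. apply cont_mult; [apply Hf|apply Hg].
  - intros i x Hi. eexists.
    apply (derivable_pt_lim_mult (fun t => f (shift x i t)) (fun t => g (shift x i t)));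
      apply (pd_ok n); auto.
Qed.

Lemma pd_const i c : pd i (fun _ => c) = fun _ => 0.
Proof. apply functional_extensionality. intros x. apply pd_spec. apply (derivable_pt_lim_const c 0). Qed.

Lemma pd_plus n i f g : C0 n f -> C0 n g -> (i < n)%nat ->
  pd i (fun y => f y + g y) = fun y => pd i f y + pd i g y.
Proof.
  intros Hf Hg Hi. apply functional_extensionality. intros x. apply pd_spec.
  apply (derivable_pt_lim_plus (fun t => f (shift x i t)) (fun t => g (shift x i t)));
    apply (pd_ok n); auto.
Qed.

Lemma pd_mult n i f g : C0 n f -> C0 n g -> (i < n)%nat ->
  pd i (fun y => f y * g y) = fun y => pd i f y * g y + f y * pd i g y.
Proof.
  intros Hf Hg Hi. apply functional_extensionality. intros x. apply pd_spec.
  pose proof (derivable_pt_lim_mult (fun t => f (shift x i t)) (fun t => g (shift x i t)) 0 _ _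
    (pd_ok n f i x Hf Hi) (pd_ok n g i x Hg Hi)) as H.
  assert (E : shift x i 0 = x).
  { apply functional_extensionality. intros k. unfold shift. destruct (Nat.eqb k i); lra. }
  unfold mult_fct in H. rewrite E in H. exact H.
Qed.

Lemma C0_minus n f g : C0 n f -> C0 n g -> C0 n (fun y => f y - g y).
Proof.
  intros Hf Hg.
  replace (fun y => f y - g y) with (fun y => f y + (fun _ => -1) y * g y).
  - apply C0_plus; auto. apply C0_mult; auto. apply C0_const.
  - apply functional_extensionality; intros; lra.
Qed.

Lemma pd_minus n i f g : C0 n f -> C0 n g -> (i < n)%nat ->
  pd i (fun y => f y - g y) = fun y => pd i f y - pd i g y.
Proof.
  intros Hf Hg Hi. apply functional_extensionality. intros x. apply pd_spec.
  apply (derivable_pt_lim_minus (fun t => f (shift x i t)) (fun t => g (shift x i t)));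
    apply (pd_ok n); auto.
Qed.

Lemma Sk_const n k c : Sk n k (fun _ => c).
Proof.
  revert c; induction k; intros c.
  - apply Sk_0, C0_const.
  - apply Sk_S. split; [apply C0_const|]. intros i Hi. rewrite pd_const. auto.
Qed.

Lemma Sk_plus n k f g : Sk n k f -> Sk n k g -> Sk n k (fun y => f y + g y).
Proof.
  revert f g. induction k; intros f g Hf Hg.
  - apply Sk_0. apply C0_plus; apply Sk_0; auto.
  - apply Sk_S in Hf as [Hf0 Hf]. apply Sk_S in Hg as [Hg0 Hg].
    apply Sk_S. split; [apply C0_plus; auto|].
    intros i Hi. rewrite (pd_plus n) by auto. apply IHk; auto.
Qed.

Lemma Sk_minus n k f g : Sk n k f -> Sk n k g -> Sk n k (fun y => f y - g y).
Proof.
  revert f g. induction k; intros f g Hf Hg.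
  - apply Sk_0. apply C0_minus; apply Sk_0; auto.
  - apply Sk_S in Hf as [Hf0 Hf]. apply Sk_S in Hg as [Hg0 Hg].
    apply Sk_S. split; [apply C0_minus; auto|].
    intros i Hi. rewrite (pd_minus n) by auto. apply IHk; auto.
Qed.

Lemma Sk_mult n k f g : Sk n k f -> Sk n k g -> Sk n k (fun y => f y * g y).
Proof.
  revert f g. induction k; intros f g Hf Hg.
  - apply Sk_0. apply C0_mult; apply Sk_0; auto.
  - pose proof Hf as Hf'. pose proof Hg as Hg'.
    apply Sk_S in Hf as [Hf0 Hf]. apply Sk_S in Hg as [Hg0 Hg].
    apply Sk_S. split; [apply C0_mult; auto|].
    intros i Hi. rewrite (pd_mult n) by auto. apply Sk_plus; apply IHk; auto.
    + apply (Sk_mono n (S k)); auto.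
    + apply (Sk_mono n (S k)); auto.
Qed.

Lemma Sk_sm n k N F : (forall j, (j < N)%nat -> Sk n k (F j)) -> Sk n k (fun y => sm N (fun j => F j y)).
Proof.
  induction N; intros H; simpl.
  - apply Sk_const.
  - apply Sk_plus; auto.
Qed.

Lemma Sk_pd n k i f : (i < n)%nat -> Sk n (S k) f -> Sk n k (pd i f).
Proof. intros Hi H. apply Sk_S in H as [_ H]. auto. Qed.

Lemma sm_const n c : smooth n (fun _ => c).
Proof. apply smooth_Sk. intros; apply Sk_const. Qed.
Lemma sm_plus' n f g : smooth n f -> smooth n g -> smooth n (fun y => f y + g y).
Proof. rewrite !smooth_Sk. intros; apply Sk_plus; auto. Qed.
Lemma sm_minus' n f g : smooth n f -> smooth n g -> smooth n (fun y => f y - g y).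
Proof. rewrite !smooth_Sk. intros; apply Sk_minus; auto. Qed.
Lemma sm_mult' n f g : smooth n f -> smooth n g -> smooth n (fun y => f y * g y).
Proof. rewrite !smooth_Sk. intros; apply Sk_mult; auto. Qed.
Lemma sm_sm' n N F : (forall j, (j < N)%nat -> smooth n (F j)) -> smooth n (fun y => sm N (fun j => F j y)).
Proof. intros H. apply smooth_Sk. intros k. apply Sk_sm. intros j Hj. apply smooth_Sk; auto. Qed.
Lemma sm_pd' n i f : (i < n)%nat -> smooth n f -> smooth n (pd i f).
Proof. rewrite !smooth_Sk. intros Hi H k. apply Sk_pd; auto. Qed.
Lemma smooth_C0 n f : smooth n f -> C0 n f.
Proof. rewrite smooth_Sk. intros H. apply Sk_0. auto. Qed.

Lemma pd_sm n i N F : (forall j, (j < N)%nat -> C0 n (F j)) -> (i < n)%nat ->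
  pd i (fun y => sm N (fun j => F j y)) = fun y => sm N (fun j => pd i (F j) y).
Proof.
  induction N; intros H Hi; simpl.
  - apply pd_const.
  - rewrite (pd_plus n).
    + rewrite IHN; auto.
    + apply Sk_0. apply Sk_sm. intros j Hj. apply Sk_0. auto.
    + auto.
    + auto.
Qed.

Lemma D_shift h v l : derivable_pt_lim (fun s => h (v + s)) 0 l -> derivable_pt_lim h v l.
Proof.
  intros H eps He. destruct (H eps He) as [d Hd]. exists d. intros h' H1 H2.
  specialize (Hd h' H1 H2). simpl in Hd.
  replace (v + (0 + h')) with (v + h') in Hd by ring. replace (v + 0) with v in Hd by ring. exact Hd.
Qed.

Lemma shift_shift_same y j v s : shift (shift y j v) j s = shift y j (v + s).
Proof. apply functional_extensionality. intros k. unfold shift. destruct (Nat.eqb k j); lra. Qed.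

Lemma shift_comm y i j u v : shift (shift y i u) j v = shift (shift y j v) i u.
Proof. apply functional_extensionality. intros k. unfold shift. destruct (Nat.eqb k i), (Nat.eqb k j); lra. Qed.

Lemma shift_0 y i : shift y i 0 = y.
Proof. apply functional_extensionality. intros k. unfold shift. destruct (Nat.eqb k i); lra. Qed.

Lemma deriv_dir n f y j v : C0 n f -> (j < n)%nat ->
  derivable_pt_lim (fun t => f (shift y j t)) v (pd j f (shift y j v)).
Proof.
  intros Hf Hj. apply D_shift.
  replace (fun s => f (shift y j (v + s))) with (fun s => f (shift (shift y j v) j s)).
  - apply (pd_ok n); auto.
  - apply functional_extensionality. intros s. rewrite shift_shift_same. reflexivity.
Qed.

Lemma Derive_eq (h : R -> R) v l : derivable_pt_lim h v l -> Derive.Derive h v = l.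
Proof. intros H. apply Derive.is_derive_unique. apply Derive.is_derive_Reals. exact H. Qed.

Lemma ex_der (h : R -> R) v l : derivable_pt_lim h v l -> @Derive.ex_derive Hierarchy.R_AbsRing Hierarchy.R_NormedModule h v.
Proof. intros H. exists l. apply Derive.is_derive_Reals. exact H. Qed.

Lemma cont2 n g x i j : (i < n)%nat -> (j < n)%nat -> i <> j -> cont_at n g x ->
  Continuity.continuity_2d_pt (fun u v => g (shift (shift x i u) j v)) 0 0.
Proof.
  intros Hi Hj Hij Hg eps.
  destruct (Hg eps (cond_pos eps)) as [d [Hd H]].
  exists (mkposreal d Hd). intros u v Hu Hv. simpl in *.
  rewrite !shift_0. apply H. intros k Hk. unfold shift.
  destruct (Nat.eqb k i) eqn:E1; destruct (Nat.eqb k j) eqn:E2.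
  - apply Nat.eqb_eq in E1, E2. lia.
  - replace (x k + u - x k) with (u - 0) by ring. auto.
  - replace (x k + v - x k) with (v - 0) by ring. auto.
  - rewrite Rminus_diag, Rabs_R0. auto.
Qed.

Lemma schwarz n f i j x : smooth n f -> (i < n)%nat -> (j < n)%nat ->
  pd i (pd j f) x = pd j (pd i f) x.
Proof.
  intros Hf Hi Hj.
  destruct (Nat.eq_dec i j) as [->|Hij]; [reflexivity|].
  set (P := fun u v => shift (shift x i u) j v).
  set (F := fun u v => f (P u v)).
  assert (Sf : C0 n f) by (apply smooth_C0; auto).
  assert (Sfj : C0 n (pd j f)) by (apply smooth_C0, sm_pd'; auto).
  assert (Sfi : C0 n (pd i f)) by (apply smooth_C0, sm_pd'; auto).
  assert (PP : forall u v, P u v = shift (shift x j v) i u) by (intros; unfold P; apply shift_comm).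
  assert (F1 : forall g, C0 n g -> forall u v, derivable_pt_lim (fun t => g (P u t)) v (pd j g (P u v))).
  { intros g Hg u v. unfold P. apply (deriv_dir n); auto. }
  assert (F2 : forall g, C0 n g -> forall u v, derivable_pt_lim (fun z => g (P z v)) u (pd i g (P u v))).
  { intros g Hg u v. rewrite PP.
    replace (fun z => g (P z v)) with (fun z => g (shift (shift x j v) i z)).
    - apply (deriv_dir n); auto.
    - apply functional_extensionality; intros z. rewrite PP. reflexivity. }
  assert (E1 : forall z v, Derive.Derive (fun t => F z t) v = pd j f (P z v)).
  { intros; apply Derive_eq; apply F1; auto. }
  assert (E2 : forall z u, Derive.Derive (fun t => F t z) u = pd i f (P u z)).
  { intros; apply Derive_eq; apply F2; auto. }
  pose proof (Derive_2d.Schwarz F 0 0) as S.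
  assert (L : Derive.Derive (fun z => Derive.Derive (fun t => F z t) 0) 0 = pd i (pd j f) x).
  { replace (fun z => Derive.Derive (fun t => F z t) 0) with (fun z => pd j f (P z 0)).
    - rewrite (Derive_eq _ _ _ (F2 _ Sfj 0 0)). unfold P. rewrite !shift_0. reflexivity.
    - apply functional_extensionality; intros z. rewrite E1. reflexivity. }
  assert (R' : Derive.Derive (fun z => Derive.Derive (fun t => F t z) 0) 0 = pd j (pd i f) x).
  { replace (fun z => Derive.Derive (fun t => F t z) 0) with (fun z => pd i f (P 0 z)).
    - rewrite (Derive_eq _ _ _ (F1 _ Sfi 0 0)). unfold P. rewrite !shift_0. reflexivity.
    - apply functional_extensionality; intros z. rewrite E2. reflexivity. }
  rewrite <- L, <- R'. apply S.
  - exists (mkposreal 1 Rlt_0_1). intros u v _ _. split; [|split; [|split]].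
    + eapply ex_der. apply F2; auto.
    + eapply ex_der. apply F1; auto.
    + replace (fun z => Derive.Derive (fun t => F z t) v) with (fun z => pd j f (P z v)).
      * eapply ex_der. apply F2; auto.
      * apply functional_extensionality; intros z. rewrite E1. reflexivity.
    + replace (fun z => Derive.Derive (fun t => F t z) u) with (fun z => pd i f (P u z)).
      * eapply ex_der. apply F1; auto.
      * apply functional_extensionality; intros z. rewrite E2. reflexivity.
  - replace (fun u v => Derive.Derive (fun z => Derive.Derive (fun t => F z t) v) u)
      with (fun u v => pd i (pd j f) (shift (shift x i u) j v)).
    + apply (cont2 n); auto. apply (proj1 (Hf [i; j] ltac:(intros m [<-|[<-|[]]]; auto))).
    + apply functional_extensionality; intros u. apply functional_extensionality; intros v.
      replace (fun z => Derive.Derive (fun t => F z t) v) with (fun z => pd j f (P z v)).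
      * symmetry. apply Derive_eq. apply F2; auto.
      * apply functional_extensionality; intros z. rewrite E1. reflexivity.
  - replace (fun u v => Derive.Derive (fun z => Derive.Derive (fun t => F t z) u) v)
      with (fun u v => pd j (pd i f) (shift (shift x i u) j v)).
    + apply (cont2 n); auto. apply (proj1 (Hf [j; i] ltac:(intros m [<-|[<-|[]]]; auto))).
    + apply functional_extensionality; intros u. apply functional_extensionality; intros v.
      replace (fun z => Derive.Derive (fun t => F t z) u) with (fun z => pd i f (P u z)).
      * symmetry. apply Derive_eq. apply F1; auto.
      * apply functional_extensionality; intros z. rewrite E2. reflexivity.
Qed.

Section Geo.
Variables (n : nat) (g ginv : metric).
Hypothesis HR : riemannian n g ginv.

Lemma g_smooth i j : (i < n)%nat -> (j < n)%nat -> smooth n (g i j).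
Proof. destruct HR as [H _]. auto. Qed.
Lemma ginv_smooth i j : (i < n)%nat -> (j < n)%nat -> smooth n (ginv i j).
Proof. destruct HR as [_ [H _]]. auto. Qed.
Lemma g_sym i j x : g i j x = g j i x.
Proof. destruct HR as [_ [_ [H _]]]. auto. Qed.
Lemma g_symf i j : g i j = g j i.
Proof. apply functional_extensionality. intros; apply g_sym. Qed.
Lemma ginv_l i j x : (i < n)%nat -> (j < n)%nat ->
  sm n (fun k => ginv i k x * g k j x) = if Nat.eqb i j then 1 else 0.
Proof. destruct HR as [_ [_ [_ [_ H]]]]. auto. Qed.

Lemma ginv_sym i j x : (i < n)%nat -> (j < n)%nat -> ginv i j x = ginv j i x.
Proof.
  intros Hi Hj.
  set (S := sm n (fun k => sm n (fun l => ginv i k x * g k l x * ginv j l x))).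
  assert (E1 : S = ginv i j x).
  { unfold S. transitivity (sm n (fun k => (if Nat.eqb j k then 1 else 0) * ginv i k x)).
    - apply sm_ext. intros k Hk.
      transitivity (ginv i k x * sm n (fun l => ginv j l x * g l k x)).
      + rewrite <- sm_scal_l. apply sm_ext. intros l _. rewrite (g_sym k l). ring.
      + rewrite ginv_l by auto. ring.
    - apply sm_delta'; auto. }
  assert (E2 : S = ginv j i x).
  { unfold S. rewrite sm_swap.
    transitivity (sm n (fun l => (if Nat.eqb i l then 1 else 0) * ginv j l x)).
    - apply sm_ext. intros l Hl. rewrite <- (ginv_l i l x) by auto. rewrite <- sm_scal_r.
      apply sm_ext. intros k _. ring.
    - apply sm_delta'; auto. }
  congruence.
Qed.

Lemma ginv_r i j x : (i < n)%nat -> (j < n)%nat ->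
  sm n (fun k => g i k x * ginv k j x) = if Nat.eqb i j then 1 else 0.
Proof.
  intros Hi Hj. rewrite Nat.eqb_sym. rewrite <- (ginv_l j i x) by auto. apply sm_ext. intros k Hk.
  rewrite (g_sym i k), (ginv_sym k j) by auto. ring.
Qed.

Lemma ginv_l' l d x : (l < n)%nat -> (d < n)%nat ->
  sm n (fun m => ginv m l x * g m d x) = if Nat.eqb l d then 1 else 0.
Proof.
  intros Hl Hd. rewrite <- (ginv_l l d x) by auto. apply sm_ext. intros m Hm.
  rewrite (ginv_sym m l) by auto. ring.
Qed.

Lemma Gam_sym i j k : Gam n g ginv i j k = Gam n g ginv j i k.
Proof.
  apply functional_extensionality. intros x. unfold Gam. f_equal. apply sm_ext. intros l _.
  rewrite (g_symf j i). ring.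
Qed.

Lemma Gam_sym2 i j : Gam n g ginv i j = Gam n g ginv j i.
Proof. apply functional_extensionality. intros k. apply Gam_sym. Qed.

Lemma Gam_smooth i j k : (i < n)%nat -> (j < n)%nat -> (k < n)%nat -> smooth n (Gam n g ginv i j k).
Proof.
  intros Hi Hj Hk. unfold Gam. apply sm_mult'; [apply sm_const|].
  apply sm_sm'. intros l Hl. apply sm_mult'; [apply ginv_smooth; auto|].
  apply sm_minus'; [apply sm_plus'|]; apply sm_pd'; auto; apply g_smooth; auto.
Qed.

Lemma Rup_smooth a b c d : (a < n)%nat -> (b < n)%nat -> (c < n)%nat -> (d < n)%nat ->
  smooth n (Rup n g ginv a b c d).
Proof.
  intros Ha Hb Hc Hd. unfold Rup.
  apply sm_plus'; [apply sm_minus'; [apply sm_minus'|]|].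
  - apply sm_pd'; auto. apply Gam_smooth; auto.
  - apply sm_pd'; auto. apply Gam_smooth; auto.
  - apply sm_sm'. intros k Hk. apply sm_mult'; apply Gam_smooth; auto.
  - apply sm_sm'. intros k Hk. apply sm_mult'; apply Gam_smooth; auto.
Qed.

Lemma Rdown_smooth a b c d : (a < n)%nat -> (b < n)%nat -> (c < n)%nat -> (d < n)%nat ->
  smooth n (Rdown n g ginv a b c d).
Proof.
  intros Ha Hb Hc Hd. unfold Rdown. apply sm_sm'. intros e He.
  apply sm_mult'; [apply Rup_smooth|apply g_smooth]; auto.
Qed.

Lemma Rup_anti a b c d x : Rup n g ginv a b c d x = - Rup n g ginv b a c d x.
Proof.
  unfold Rup.
  rewrite (sm_ext n (fun k => Gam n g ginv b c k x * Gam n g ginv a k d x)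
                    (fun k => Gam n g ginv a k d x * Gam n g ginv b c k x)) by (intros; ring).
  rewrite (sm_ext n (fun k => Gam n g ginv b k d x * Gam n g ginv a c k x)
                    (fun k => Gam n g ginv a c k x * Gam n g ginv b k d x)) by (intros; ring).
  ring.
Qed.

Lemma Rup_bianchi a b c d x :
  Rup n g ginv a b c d x + Rup n g ginv b c a d x + Rup n g ginv c a b d x = 0.
Proof.
  unfold Rup.
  rewrite (Gam_sym2 c a), (Gam_sym2 b a), (Gam_sym2 c b).
  rewrite (sm_ext n (fun k => Gam n g ginv b k d x * Gam n g ginv a c k x)
                    (fun k => Gam n g ginv a c k x * Gam n g ginv b k d x)) by (intros; ring).
  rewrite (sm_ext n (fun k => Gam n g ginv c k d x * Gam n g ginv a b k x)
                    (fun k => Gam n g ginv a b k x * Gam n g ginv c k d x)) by (intros; ring).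
  rewrite (sm_ext n (fun k => Gam n g ginv a k d x * Gam n g ginv b c k x)
                    (fun k => Gam n g ginv b c k x * Gam n g ginv a k d x)) by (intros; ring).
  ring.
Qed.

Lemma lowerGam b c d y : (b < n)%nat -> (c < n)%nat -> (d < n)%nat ->
  sm n (fun m => Gam n g ginv b c m y * g m d y) =
  / 2 * (pd b (g c d) y + pd c (g b d) y - pd d (g b c) y).
Proof.
  intros Hb Hc Hd. unfold Gam.
  set (A := fun l => pd b (g c l) y + pd c (g b l) y - pd l (g b c) y).
  transitivity (sm n (fun m => sm n (fun l => /2 * (ginv m l y * A l) * g m d y))).
  { apply sm_ext. intros m _. rewrite <- sm_scal_l, <- sm_scal_r. reflexivity. }
  rewrite sm_swap.
  transitivity (sm n (fun l => (if Nat.eqb l d then 1 else 0) * (/2 * A l))).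
  { apply sm_ext. intros l Hl. rewrite <- (ginv_l' l d y) by auto.
    rewrite <- sm_scal_r. apply sm_ext. intros; ring. }
  rewrite sm_delta by auto. unfold A. reflexivity.
Qed.

Lemma metric_compat b c d y : (b < n)%nat -> (c < n)%nat -> (d < n)%nat ->
  pd b (g c d) y = sm n (fun m => Gam n g ginv b c m y * g m d y)
                 + sm n (fun m => Gam n g ginv b d m y * g c m y).
Proof.
  intros Hb Hc Hd. rewrite lowerGam by auto.
  rewrite (sm_ext n (fun m => Gam n g ginv b d m y * g c m y) (fun m => Gam n g ginv b d m y * g m c y))
    by (intros; rewrite g_sym; reflexivity).
  rewrite lowerGam by auto. rewrite (g_symf d c). field.
Qed.

End Geo.

Fixpoint upd (l : list nat) (k m : nat) : list nat :=
  match l, k with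
  | [], _ => []
  | _ :: t, O => m :: t
  | h :: t, S k' => h :: upd t k' m
  end.

Lemma upd_length l k m : length (upd l k m) = length l.
Proof. revert k; induction l; intros [|k]; simpl; auto. Qed.

Lemma upd_nth_same l k m : (k < length l)%nat -> nth k (upd l k m) 0%nat = m.
Proof. revert k; induction l; intros [|k] H; simpl in *; try lia; auto. apply IHl. lia. Qed.

Lemma upd_nth_other l k j m : j <> k -> nth j (upd l k m) 0%nat = nth j l 0%nat.
Proof.
  revert k j; induction l; intros [|k] [|j] H; simpl; auto; try lia.
  all: try (destruct j; reflexivity).
  all: try (apply IHl; lia).
Qed.

Lemma upd_upd_same l k m p : upd (upd l k m) k p = upd l k p.
Proof. revert k; induction l; intros [|k]; simpl; auto. rewrite IHl. auto. Qed.

Lemma upd_upd_comm l k j m p : j <> k -> upd (upd l k m) j p = upd (upd l j p) k m.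
Proof.
  revert k j; induction l; intros [|k] [|j] H; simpl; auto; try lia.
  rewrite IHl by lia. auto.
Qed.

Lemma upd_in l k m i : In i (upd l k m) -> In i l \/ i = m.
Proof.
  revert k; induction l; intros [|k] H; simpl in *; auto.
  - destruct H; auto.
  - destruct H; auto. destruct (IHl k H); auto.
Qed.

Lemma nth_in_bound (P : nat -> Prop) l k : (forall i, In i l -> P i) -> (k < length l)%nat -> P (nth k l 0%nat).
Proof. intros H Hk. apply H. apply nth_In. auto. Qed.

Lemma corr_alt n G a T pre suf x :
  corr n G a T pre suf x =
  sm (length suf) (fun k => sm n (fun m => G a (nth k suf 0%nat) m x * T (pre ++ upd suf k m) x)).
Proof.
  revert pre. induction suf as [|c s IH]; intros pre.
  - reflexivity.
  - cbn [corr]. rewrite IH. change (length (c :: s)) with (S (length s)).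
    rewrite (sm_first (length s)). cbn [nth upd]. f_equal.
    apply sm_ext. intros k _. apply sm_ext. intros m _. rewrite <- app_assoc. reflexivity.
Qed.

Lemma sm_split_at L k F : (k < L)%nat ->
  sm L F = F k + sm L (fun j => if Nat.eqb j k then 0 else F j).
Proof.
  induction L; intros H; [lia|]. simpl.
  destruct (Nat.eq_dec k L).
  - subst. rewrite Nat.eqb_refl.
    rewrite (sm_ext L (fun j => if Nat.eqb j L then 0 else F j) F).
    + lra.
    + intros j Hj. destruct (Nat.eqb_spec j L); [lia|auto].
  - rewrite IHL by lia. destruct (Nat.eqb_spec L k); [lia|]. lra.
Qed.

Section RicciAlg.
Variables (n : nat) (I : list nat).
Let L := length I.
Variables (Tf : list nat -> R) (DTa DTb : list nat -> R) (Gf : nat -> nat -> nat -> R)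
  (DGa DGb : nat -> nat -> nat -> R) (DDab DDba Xab Xba : R) (a b : nat).
Hypothesis Gsym : forall i j k, Gf i j k = Gf j i k.

Definition Ecore (a b : nat) (DGa : nat -> nat -> nat -> R) (DTa DTb : list nat -> R) DD X :=
  DD - sm L (fun k => sm n (fun m => DGa b (nth k I 0%nat) m * Tf (upd I k m)
                                     + Gf b (nth k I 0%nat) m * DTa (upd I k m)))
     - X
     - sm L (fun k => sm n (fun m => Gf a (nth k I 0%nat) m *
          (DTb (upd I k m) - sm (length (upd I k m)) (fun j => sm n (fun p =>
              Gf b (nth j (upd I k m) 0%nat) p * Tf (upd (upd I k m) j p)))))).

Definition Qf (a b : nat) := sm L (fun k => sm n (fun m => Gf a (nth k I 0%nat) m *
          sm (length (upd I k m)) (fun j => sm n (fun p =>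
              Gf b (nth j (upd I k m) 0%nat) p * Tf (upd (upd I k m) j p))))).

Definition Off (a b : nat) := sm L (fun k => sm n (fun m => sm L (fun j => sm n (fun p =>
   if Nat.eqb j k then 0 else Gf a (nth k I 0%nat) m * Gf b (nth j I 0%nat) p * Tf (upd (upd I k m) j p))))).

Definition Diag (a b : nat) := sm L (fun k => sm n (fun m => sm n (fun p =>
   Gf a (nth k I 0%nat) m * Gf b m p * Tf (upd I k p)))).

Lemma Q_split a' b' : Qf a' b' = Diag a' b' + Off a' b'.
Proof.
  unfold Qf, Diag, Off. rewrite <- sm_plus. apply sm_ext. intros k Hk.
  rewrite <- sm_plus. apply sm_ext. intros m _.
  rewrite upd_length. fold L. rewrite (sm_split_at L k) by auto.
  rewrite upd_nth_same by auto.
  rewrite Rmult_plus_distr_l. f_equal.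
  - rewrite <- sm_scal_l. apply sm_ext. intros p _. rewrite upd_upd_same. ring.
  - rewrite <- sm_scal_l. apply sm_ext. intros j Hj.
    destruct (Nat.eqb_spec j k).
    + rewrite sm_zero'; [ring|]. intros; auto.
    + rewrite <- sm_scal_l. apply sm_ext. intros p _. rewrite upd_nth_other by auto. ring.
Qed.

Lemma Off_sym a' b' : Off a' b' = Off b' a'.
Proof.
  unfold Off.
  symmetry.
  transitivity (sm L (fun k => sm L (fun j => sm n (fun m => sm n (fun p =>
      if Nat.eqb j k then 0 else Gf b' (nth k I 0%nat) m * Gf a' (nth j I 0%nat) p * Tf (upd (upd I k m) j p)))))).
  { apply sm_ext; intros k _. apply sm_swap. }
  rewrite sm_swap.
  apply sm_ext; intros j Hj.
  transitivity (sm n (fun p => sm L (fun k => sm n (fun m =>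
      if Nat.eqb j k then 0 else Gf b' (nth k I 0%nat) m * Gf a' (nth j I 0%nat) p * Tf (upd (upd I k m) j p))))).
  { etransitivity; [apply sm_ext; intros k _; apply sm_swap|]. apply sm_swap. }
  apply sm_ext; intros p _. apply sm_ext; intros k _. apply sm_ext; intros m _.
  rewrite Nat.eqb_sym. destruct (Nat.eqb_spec k j); [reflexivity|].
  rewrite upd_upd_comm by auto. ring.
Qed.

Lemma ricci_alg :
  DDab = DDba -> Xab = Xba ->
  Ecore a b DGa DTa DTb DDab Xab - Ecore b a DGb DTb DTa DDba Xba =
  - sm L (fun k => sm n (fun p =>
      (DGa b (nth k I 0%nat) p - DGb a (nth k I 0%nat) p
       - sm n (fun m => Gf a (nth k I 0%nat) m * Gf b m p)
       + sm n (fun m => Gf a m p * Gf b (nth k I 0%nat) m)) * Tf (upd I k p))).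
Proof.
  intros HD HX. unfold Ecore.
  assert (EQ : forall a' b' (DTb' : list nat -> R),
     sm L (fun k => sm n (fun m => Gf a' (nth k I 0%nat) m *
          (DTb' (upd I k m) - sm (length (upd I k m)) (fun j => sm n (fun p =>
              Gf b' (nth j (upd I k m) 0%nat) p * Tf (upd (upd I k m) j p))))))
     = sm L (fun k => sm n (fun m => Gf a' (nth k I 0%nat) m * DTb' (upd I k m))) - Qf a' b').
  { intros. unfold Qf. rewrite <- sm_minus. apply sm_ext. intros k _. rewrite <- sm_minus.
    apply sm_ext. intros m _. ring. }
  rewrite !EQ. rewrite !Q_split. rewrite (Off_sym a b).
  assert (DA : forall a' b', Diag a' b' = sm L (fun k => sm n (fun p =>
      sm n (fun m => Gf a' (nth k I 0%nat) m * Gf b' m p) * Tf (upd I k p)))).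
  { intros. unfold Diag. apply sm_ext; intros k _.
    etransitivity; [apply sm_swap|]. apply sm_ext; intros p _.
    rewrite <- sm_scal_r. reflexivity. }
  assert (R1 : sm L (fun k => sm n (fun p =>
      (DGa b (nth k I 0%nat) p - DGb a (nth k I 0%nat) p
       - sm n (fun m => Gf a (nth k I 0%nat) m * Gf b m p)
       + sm n (fun m => Gf a m p * Gf b (nth k I 0%nat) m)) * Tf (upd I k p)))
    = sm L (fun k => sm n (fun p => DGa b (nth k I 0%nat) p * Tf (upd I k p)))
    - sm L (fun k => sm n (fun p => DGb a (nth k I 0%nat) p * Tf (upd I k p)))
    - Diag a b + Diag b a).
  { rewrite !DA. rewrite <- !sm_minus, <- !sm_plus. apply sm_ext; intros k _.
    rewrite <- !sm_minus, <- !sm_plus. apply sm_ext; intros p _.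
    rewrite (sm_ext n (fun m => Gf b (nth k I 0%nat) m * Gf a m p)
                      (fun m => Gf a m p * Gf b (nth k I 0%nat) m)) by (intros; ring).
    ring. }
  rewrite R1.
  assert (SP : forall F G : nat -> nat -> R, sm L (fun k => sm n (fun m => F k m + G k m)) =
     sm L (fun k => sm n (fun m => F k m)) + sm L (fun k => sm n (fun m => G k m))).
  { intros F G. rewrite <- sm_plus. apply sm_ext; intros k _. apply sm_plus. }
  rewrite (SP (fun k m => DGa b (nth k I 0%nat) m * Tf (upd I k m))
              (fun k m => Gf b (nth k I 0%nat) m * DTa (upd I k m))).
  rewrite (SP (fun k m => DGb a (nth k I 0%nat) m * Tf (upd I k m))
              (fun k m => Gf a (nth k I 0%nat) m * DTb (upd I k m))).
  rewrite HD, HX. ring.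
Qed.
End RicciAlg.

Section Ricci.
Variables (n : nat) (g ginv : metric).
Hypothesis HR : riemannian n g ginv.
Variable T : tensor.
Hypothesis HT : forall J, (forall i, In i J -> (i < n)%nat) -> smooth n (T J).

Definition Ok (J : list nat) := forall i, In i J -> (i < n)%nat.

Lemma Ok_upd J k m : Ok J -> (m < n)%nat -> Ok (upd J k m).
Proof. intros H Hm i Hi. destruct (upd_in J k m i Hi); subst; auto. Qed.

Lemma Ok_nth J k : Ok J -> (k < length J)%nat -> (nth k J 0%nat < n)%nat.
Proof. intros H Hk. apply H. apply nth_In. auto. Qed.

Lemma corr_fun b pre suf :
  (fun y => corr n (Gam n g ginv) b T pre suf y) =
  (fun y => sm (length suf) (fun k => sm n (fun m => Gam n g ginv b (nth k suf 0%nat) m y * T (pre ++ upd suf k m) y))).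
Proof. apply functional_extensionality. intros y. apply corr_alt. Qed.

Lemma corr_smooth b pre suf : (b < n)%nat -> Ok pre -> Ok suf ->
  smooth n (fun y => corr n (Gam n g ginv) b T pre suf y).
Proof.
  intros Hb Hp Hs. rewrite corr_fun. apply sm_sm'. intros k Hk. apply sm_sm'. intros m Hm.
  apply sm_mult'.
  - apply (Gam_smooth n g ginv HR); auto. apply Ok_nth; auto.
  - apply HT. intros i Hi. apply in_app_or in Hi. destruct Hi as [Hi|Hi]; auto.
    apply (Ok_upd suf k m Hs Hm); auto.
Qed.

Lemma pd_corr a b I x : (a < n)%nat -> (b < n)%nat -> Ok I ->
  pd a (fun y => corr n (Gam n g ginv) b T [] I y) x =
  sm (length I) (fun k => sm n (fun m =>
     pd a (Gam n g ginv b (nth k I 0%nat) m) x * T (upd I k m) x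
     + Gam n g ginv b (nth k I 0%nat) m x * pd a (T (upd I k m)) x)).
Proof.
  intros Ha Hb HI. rewrite corr_fun. simpl.
  rewrite (pd_sm n); auto.
  - apply sm_ext. intros k Hk. rewrite (pd_sm n); auto.
    + apply sm_ext. intros m Hm. rewrite (pd_mult n); auto.
      * apply smooth_C0. apply (Gam_smooth n g ginv HR); auto. apply Ok_nth; auto.
      * apply smooth_C0. apply HT. apply Ok_upd; auto.
    + intros m Hm. apply C0_mult; apply smooth_C0.
      * apply (Gam_smooth n g ginv HR); auto. apply Ok_nth; auto.
      * apply HT. apply Ok_upd; auto.
  - intros k Hk. apply smooth_C0. apply sm_sm'. intros m Hm. apply sm_mult'.
    + apply (Gam_smooth n g ginv HR); auto. apply Ok_nth; auto.
    + apply HT. apply Ok_upd; auto.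
Qed.

Lemma cov_cons b J : cov n g ginv T (b :: J) =
  fun y => pd b (T J) y - corr n (Gam n g ginv) b T [] J y.
Proof. reflexivity. Qed.

Lemma covcov_Ecore a b I x : (a < n)%nat -> (b < n)%nat -> Ok I ->
  cov n g ginv (cov n g ginv T) (a :: b :: I) x =
  Ecore n I (fun J => T J x) (fun i j k => Gam n g ginv i j k x) a b
    (fun i j k => pd a (Gam n g ginv i j k) x) (fun J => pd a (T J) x) (fun J => pd b (T J) x)
    (pd a (pd b (T I)) x)
    (sm n (fun m => Gam n g ginv a b m x * cov n g ginv T (m :: I) x)).
Proof.
  intros Ha Hb HI.
  change (cov n g ginv (cov n g ginv T) (a :: b :: I) x) with
    (pd a (cov n g ginv T (b :: I)) x - corr n (Gam n g ginv) a (cov n g ginv T) [] (b :: I) x).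
  rewrite cov_cons. rewrite (pd_minus n); auto.
  2: { apply smooth_C0. apply sm_pd'; auto. }
  2: { apply smooth_C0. apply corr_smooth; auto. intros i []. }
  rewrite pd_corr by auto.
  cbn [corr app].
  rewrite corr_alt.
  unfold Ecore.
  replace (sm (length I) (fun k => sm n (fun m => Gam n g ginv a (nth k I 0%nat) m x *
        cov n g ginv T ([b] ++ upd I k m) x)))
   with (sm (length I) (fun k => sm n (fun m => Gam n g ginv a (nth k I 0%nat) m x *
          (pd b (T (upd I k m)) x - sm (length (upd I k m)) (fun j => sm n (fun p =>
              Gam n g ginv b (nth j (upd I k m) 0%nat) p x * T (upd (upd I k m) j p) x)))))).
  - ring.
  - apply sm_ext; intros k _. apply sm_ext; intros m _. f_equal.
    simpl. rewrite corr_alt. reflexivity.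
Qed.

Lemma ricci_identity a b I x : (a < n)%nat -> (b < n)%nat -> Ok I ->
  cov n g ginv (cov n g ginv T) (a :: b :: I) x - cov n g ginv (cov n g ginv T) (b :: a :: I) x =
  - sm (length I) (fun k => sm n (fun p => Rup n g ginv a b (nth k I 0%nat) p x * T (upd I k p) x)).
Proof.
  intros Ha Hb HI. rewrite !covcov_Ecore by auto.
  rewrite ricci_alg.
  all: try (apply (schwarz n); auto; fail).
  all: try (rewrite (Gam_sym2 n g ginv HR a b); reflexivity).
  all: try (f_equal; apply sm_ext; intros k _; apply sm_ext; intros p _; unfold Rup; reflexivity).
Qed.

End Ricci.

Section D.
Variables (n : nat) (g ginv : metric).
Hypothesis HR : riemannian n g ginv.

Lemma Rtens_smooth J : (forall i, In i J -> (i < n)%nat) -> smooth n (Rtens n g ginv J).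
Proof.
  intros H.
  destruct J as [|c [|d [|e [|f [|h t]]]]]; unfold Rtens; cbv beta iota; try apply sm_const.
  apply (Rdown_smooth n g ginv HR); apply H; simpl; tauto.
Qed.

Lemma semisym_S4 a b c d e f x : semisymmetric n g ginv ->
  (a < n)%nat -> (b < n)%nat -> (c < n)%nat -> (d < n)%nat -> (e < n)%nat -> (f < n)%nat ->
  sm n (fun p => Rup n g ginv a b c p x * Rdown n g ginv p d e f x)
  + sm n (fun p => Rup n g ginv a b d p x * Rdown n g ginv c p e f x)
  + sm n (fun p => Rup n g ginv a b e p x * Rdown n g ginv c d p f x)
  + sm n (fun p => Rup n g ginv a b f p x * Rdown n g ginv c d e p x) = 0.
Proof.
  intros HS Ha Hb Hc Hd He Hf.
  pose proof (HS a b c d e f x Ha Hb Hc Hd He Hf) as H.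
  rewrite (ricci_identity n g ginv HR (Rtens n g ginv) Rtens_smooth a b [c;d;e;f] x) in H; auto.
  - simpl in H. lra.
  - intros i Hi. simpl in Hi. intuition (subst; auto).
Qed.

Definition Gt : tensor := fun l x => match l with [c; d] => g c d x | _ => 0 end.

Lemma Gt_smooth J : (forall i, In i J -> (i < n)%nat) -> smooth n (Gt J).
Proof.
  intros H.
  destruct J as [|c [|d [|e t]]]; unfold Gt; cbv beta iota; try apply sm_const.
  apply (g_smooth n g ginv HR); apply H; simpl; tauto.
Qed.

Lemma covGt_zero b c d : (b < n)%nat -> (c < n)%nat -> (d < n)%nat ->
  cov n g ginv Gt [b; c; d] = fun _ => 0.
Proof.
  intros Hb Hc Hd. apply functional_extensionality. intros y.
  change (pd b (g c d) y - (sm n (fun m => Gam n g ginv b c m y * g m d y)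
     + (sm n (fun m => Gam n g ginv b d m y * g c m y) + 0)) = 0).
  rewrite (metric_compat n g ginv HR) by auto. ring.
Qed.

Lemma Rdown_anti a b c d x : (a < n)%nat -> (b < n)%nat -> (c < n)%nat -> (d < n)%nat ->
  Rdown n g ginv a b c d x = - Rdown n g ginv a b d c x.
Proof.
  intros Ha Hb Hc Hd.
  assert (HO : Ok n [c;d]) by (intros i Hi; simpl in Hi; intuition (subst; auto)).
  pose proof (ricci_identity n g ginv HR Gt Gt_smooth a b [c;d] x Ha Hb HO) as H.
  assert (Z : forall a' b', (a' < n)%nat -> (b' < n)%nat ->
     cov n g ginv (cov n g ginv Gt) [a'; b'; c; d] x = 0).
  { intros a' b' Ha' Hb'.
    change (pd a' (cov n g ginv Gt [b'; c; d]) x -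
       (sm n (fun m => Gam n g ginv a' b' m x * cov n g ginv Gt [m; c; d] x)
       + (sm n (fun m => Gam n g ginv a' c m x * cov n g ginv Gt [b'; m; d] x)
       + (sm n (fun m => Gam n g ginv a' d m x * cov n g ginv Gt [b'; c; m] x) + 0))) = 0).
    rewrite covGt_zero by auto. rewrite pd_const.
    rewrite !sm_zero'; [ring| | |]; intros m Hm; rewrite covGt_zero by auto; ring. }
  rewrite !Z in H by auto.
  simpl in H. unfold Rdown.
  rewrite (sm_ext n (fun e => Rup n g ginv a b d e x * g e c x) (fun e => Rup n g ginv a b d e x * g c e x))
    by (intros; rewrite (g_sym n g ginv HR); reflexivity).
  lra.
Qed.

End D.

Section E.
Variables (n : nat) (g ginv : metric).
Hypothesis HR : riemannian n g ginv.
Hypothesis HS : semisymmetric n g ginv.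
Variable x : pt.

Notation U a b c d := (Rup n g ginv a b c d x) (only parsing).
Notation W a b c d := (Rdown n g ginv a b c d x) (only parsing).

Lemma raise a b c f : (f < n)%nat ->
  sm n (fun q => W a b c q * ginv q f x) = U a b c f.
Proof.
  intros Hf. unfold Rdown.
  transitivity (sm n (fun q => sm n (fun e => U a b c e * (g e q x * ginv q f x)))).
  { apply sm_ext; intros q _. rewrite <- sm_scal_r. apply sm_ext; intros; ring. }
  rewrite sm_swap.
  transitivity (sm n (fun e => (if Nat.eqb e f then 1 else 0) * U a b c e)).
  { apply sm_ext; intros e He. rewrite sm_scal_l. rewrite (ginv_r n g ginv HR) by auto. ring. }
  apply sm_delta; auto.
Qed.

Lemma swapUD a b c d e f :
  sm n (fun m => U a b c m * W d e f m) = sm n (fun m => U d e f m * W a b c m).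
Proof.
  unfold Rdown.
  transitivity (sm n (fun m => sm n (fun q => U a b c m * U d e f q * g q m x))).
  { apply sm_ext; intros m _. rewrite <- sm_scal_l. apply sm_ext; intros; ring. }
  rewrite sm_swap. apply sm_ext; intros q _. rewrite <- sm_scal_l. apply sm_ext; intros m _.
  rewrite (g_sym n g ginv HR q m). ring.
Qed.

Lemma sum_raise (A : nat -> R) (B : nat -> nat -> R) f :
  sm n (fun q => sm n (fun p => A p * B p q) * ginv q f x) =
  sm n (fun p => A p * sm n (fun q => B p q * ginv q f x)).
Proof.
  transitivity (sm n (fun q => sm n (fun p => A p * (B p q * ginv q f x)))).
  { apply sm_ext; intros q _. rewrite <- sm_scal_r. apply sm_ext; intros; ring. }
  rewrite sm_swap. apply sm_ext; intros p _. rewrite sm_scal_l. reflexivity.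
Qed.

Definition Hm a b c d e f m :=
  U a b c m * U m d e f + U a b d m * U c m e f + U a b e m * U c d m f - U c d e m * U a b m f.

Lemma Hup a b c d e f : (a < n)%nat -> (b < n)%nat -> (c < n)%nat -> (d < n)%nat -> (e < n)%nat -> (f < n)%nat ->
  sm n (fun m => Hm a b c d e f m) = 0.
Proof.
  intros Ha Hb Hc Hd He Hf.
  assert (Z : sm n (fun q => sm n (fun p => U a b c p * W p d e q) * ginv q f x)
      + sm n (fun q => sm n (fun p => U a b d p * W c p e q) * ginv q f x)
      + sm n (fun q => sm n (fun p => U a b e p * W c d p q) * ginv q f x)
      + sm n (fun q => sm n (fun p => U a b q p * W c d e p) * ginv q f x) = 0).
  { rewrite <- !sm_plus. apply sm_zero'. intros q Hq.
    rewrite <- !Rmult_plus_distr_r. rewrite (semisym_S4 n g ginv HR) by auto. ring. }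
  assert (Z4 : sm n (fun q => sm n (fun p => U a b q p * W c d e p) * ginv q f x) =
                - sm n (fun p => U c d e p * U a b p f)).
  { transitivity (sm n (fun q => sm n (fun p => (- U c d e p) * W a b p q) * ginv q f x)).
    - apply sm_ext; intros q Hq. f_equal. rewrite swapUD. apply sm_ext; intros p Hp.
      rewrite (Rdown_anti n g ginv HR) by auto. ring.
    - rewrite sum_raise.
      transitivity (sm n (fun p => -1 * (U c d e p * U a b p f))).
      + apply sm_ext; intros p Hp. rewrite raise by auto. ring.
      + rewrite sm_scal_l. ring. }
  rewrite Z4 in Z. rewrite !sum_raise in Z.
  rewrite (sm_ext n (fun p => U a b c p * sm n (fun q => W p d e q * ginv q f x))
                    (fun p => U a b c p * U p d e f)) in Z by (intros; rewrite raise; auto).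
  rewrite (sm_ext n (fun p => U a b d p * sm n (fun q => W c p e q * ginv q f x))
                    (fun p => U a b d p * U c p e f)) in Z by (intros; rewrite raise; auto).
  rewrite (sm_ext n (fun p => U a b e p * sm n (fun q => W c d p q * ginv q f x))
                    (fun p => U a b e p * U c d p f)) in Z by (intros; rewrite raise; auto).
  unfold Hm. rewrite sm_minus, !sm_plus. lra.
Qed.
End E.

Lemma sm_opp N f : sm N (fun k => - f k) = - sm N f.
Proof. induction N; simpl; [lra|]. rewrite IHN. lra. Qed.

Section E2.
Variables (n : nat) (g ginv : metric).
Hypothesis HR : riemannian n g ginv.
Hypothesis HS : semisymmetric n g ginv.
Variable x : pt.

Notation U a b c d := (Rup n g ginv a b c d x) (only parsing).
Notation Ri a b := (Ric n g ginv a b x) (only parsing).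

Lemma bian_sw a b c m : U a b c m = U a c b m - U b c a m.
Proof.
  pose proof (Rup_bianchi n g ginv HR a b c m x). pose proof (Rup_anti n g ginv c a b m x). lra.
Qed.

Lemma concl1 a b c d e f : (a < n)%nat -> (b < n)%nat -> (c < n)%nat ->
     (d < n)%nat -> (e < n)%nat -> (f < n)%nat ->
     sm n (fun m => U a b c m * U d m e f)
   + sm n (fun m => U b c d m * U a m e f)
   + sm n (fun m => U c d a m * U b m e f)
   + sm n (fun m => U d a b m * U c m e f)
   - sm n (fun m => U a c e m * U b d m f)
   + sm n (fun m => U a c m f * U b d e m) = 0.
Proof.
  intros Ha Hb Hc Hd He Hf.
  transitivity (sm n (fun m => - Hm n g ginv x a c b d e f m + Hm n g ginv x a d b c e f m
                              + Hm n g ginv x b c a d e f m)).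
  - repeat (rewrite <- sm_plus || rewrite <- sm_minus). apply sm_ext. intros m _.
    unfold Hm.
    rewrite (Rup_anti n g ginv d m e f), (Rup_anti n g ginv c m e f), (Rup_anti n g ginv d a b m).
    rewrite (bian_sw a b c m).
    assert (F5 : U c d a m = U a d c m - U a c d m).
    { pose proof (Rup_bianchi n g ginv HR c d a m x). pose proof (Rup_anti n g ginv d a c m x). lra. }
    rewrite F5. ring.
  - rewrite !sm_plus, sm_opp. rewrite !(Hup n g ginv HR HS x) by auto. ring.
Qed.

Lemma TrH a b c e :
  sm n (fun t => sm n (fun m => Hm n g ginv x a b c t e t m)) =
  sm n (fun m => U a b c m * Ri m e) + sm n (fun m => U a b e m * Ri c m).
Proof.
  unfold Hm, Ric.
  transitivity (sm n (fun t => sm n (fun m => U a b c m * U m t e t))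
              + sm n (fun t => sm n (fun m => U a b t m * U c m e t))
              + sm n (fun t => sm n (fun m => U a b e m * U c t m t))
              - sm n (fun t => sm n (fun m => U c t e m * U a b m t))).
  { repeat (rewrite <- sm_plus || rewrite <- sm_minus). apply sm_ext; intros t _.
    repeat (rewrite <- sm_plus || rewrite <- sm_minus). reflexivity. }
  assert (E : sm n (fun t => sm n (fun m => U c t e m * U a b m t)) =
              sm n (fun t => sm n (fun m => U a b t m * U c m e t))).
  { rewrite sm_swap. apply sm_ext; intros t _. apply sm_ext; intros m _. ring. }
  rewrite E.
  rewrite (sm_swap n n (fun t m => U a b c m * U m t e t)).
  rewrite (sm_swap n n (fun t m => U a b e m * U c t m t)).
  rewrite (sm_ext n (fun m => sm n (fun t => U a b c m * U m t e t))
                    (fun m => U a b c m * sm n (fun t => U m t e t))) by (intros; apply sm_scal_l).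
  rewrite (sm_ext n (fun m => sm n (fun t => U a b e m * U c t m t))
                    (fun m => U a b e m * sm n (fun t => U c t m t))) by (intros; apply sm_scal_l).
  ring.
Qed.

Lemma TrH0 a b c e : (a < n)%nat -> (b < n)%nat -> (c < n)%nat -> (e < n)%nat ->
  sm n (fun m => U a b c m * Ri m e) + sm n (fun m => U a b e m * Ri c m) = 0.
Proof.
  intros. rewrite <- TrH. apply sm_zero'. intros t Ht. apply (Hup n g ginv HR HS x); auto.
Qed.

Lemma concl2 a b c e : (a < n)%nat -> (b < n)%nat -> (c < n)%nat -> (e < n)%nat ->
     sm n (fun m => Ri a m * U b c e m)
   + sm n (fun m => Ri b m * U c a e m)
   + sm n (fun m => Ri c m * U a b e m) = 0.
Proof.
  intros Ha Hb Hc He.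
  pose proof (TrH0 a b c e Ha Hb Hc He) as Z1.
  pose proof (TrH0 a c b e Ha Hc Hb He) as Z2.
  pose proof (TrH0 b c a e Hb Hc Ha He) as Z3.
  transitivity ((sm n (fun m => U a b c m * Ri m e) + sm n (fun m => U a b e m * Ri c m))
    - (sm n (fun m => U a c b m * Ri m e) + sm n (fun m => U a c e m * Ri b m))
    + (sm n (fun m => U b c a m * Ri m e) + sm n (fun m => U b c e m * Ri a m))).
  - repeat (rewrite <- sm_plus || rewrite <- sm_minus). apply sm_ext; intros m _.
    rewrite (Rup_anti n g ginv c a e m). rewrite (bian_sw a b c m). ring.
  - rewrite Z1, Z2, Z3. ring.
Qed.

Lemma concl3 a b c e : (a < n)%nat -> (b < n)%nat -> (c < n)%nat -> (e < n)%nat ->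
     sm n (fun m => Ri a m * U b e c m)
   - sm n (fun m => Ri b m * U a c e m)
   + sm n (fun m => Ri c m * U e b a m)
   - sm n (fun m => Ri e m * U c a b m) = 0.
Proof.
  intros Ha Hb Hc He.
  pose proof (concl2 a b c e Ha Hb Hc He) as Z1.
  pose proof (concl2 a c e b Ha Hc He Hb) as Z2.
  transitivity ((sm n (fun m => Ri a m * U b c e m) + sm n (fun m => Ri b m * U c a e m)
                 + sm n (fun m => Ri c m * U a b e m))
              + (sm n (fun m => Ri a m * U c e b m) + sm n (fun m => Ri c m * U e a b m)
                 + sm n (fun m => Ri e m * U a c b m))).
  - repeat (rewrite <- sm_plus || rewrite <- sm_minus). apply sm_ext; intros m _.
    assert (B1 : U b e c m = U b c e m + U c e b m).
    { pose proof (Rup_bianchi n g ginv HR b c e m x). pose proof (Rup_anti n g ginv e b c m x). lra. }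
    assert (B2 : U e b a m = U a b e m + U e a b m).
    { pose proof (Rup_bianchi n g ginv HR a b e m x). pose proof (Rup_anti n g ginv b e a m x). lra. }
    rewrite B1, B2, (Rup_anti n g ginv c a e m), (Rup_anti n g ginv c a b m). ring.
  - rewrite Z1, Z2. ring.
Qed.
End E2.

Theorem mainTheorem8 (n : nat) (g ginv : metric) :
  riemannian n g ginv -> semisymmetric n g ginv ->
  forall x : pt,
  (forall a b c d e f, (a < n)%nat -> (b < n)%nat -> (c < n)%nat ->
     (d < n)%nat -> (e < n)%nat -> (f < n)%nat ->
     sm n (fun m => Rup n g ginv a b c m x * Rup n g ginv d m e f x)
   + sm n (fun m => Rup n g ginv b c d m x * Rup n g ginv a m e f x)
   + sm n (fun m => Rup n g ginv c d a m x * Rup n g ginv b m e f x)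
   + sm n (fun m => Rup n g ginv d a b m x * Rup n g ginv c m e f x)
   - sm n (fun m => Rup n g ginv a c e m x * Rup n g ginv b d m f x)
   + sm n (fun m => Rup n g ginv a c m f x * Rup n g ginv b d e m x) = 0) /\
  (forall a b c e, (a < n)%nat -> (b < n)%nat -> (c < n)%nat -> (e < n)%nat ->
     sm n (fun m => Ric n g ginv a m x * Rup n g ginv b c e m x)
   + sm n (fun m => Ric n g ginv b m x * Rup n g ginv c a e m x)
   + sm n (fun m => Ric n g ginv c m x * Rup n g ginv a b e m x) = 0) /\
  (forall a b c e, (a < n)%nat -> (b < n)%nat -> (c < n)%nat -> (e < n)%nat ->
     sm n (fun m => Ric n g ginv a m x * Rup n g ginv b e c m x)
   - sm n (fun m => Ric n g ginv b m x * Rup n g ginv a c e m x)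
   + sm n (fun m => Ric n g ginv c m x * Rup n g ginv e b a m x)
   - sm n (fun m => Ric n g ginv e m x * Rup n g ginv c a b m x) = 0).
Proof.
  intros HR HS x. split; [|split].
  - intros. apply (concl1 n g ginv HR HS x); auto.
  - intros. apply (concl2 n g ginv HR HS x); auto.
  - intros. apply (concl3 n g ginv HR HS x); auto.
Qed.
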